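(* Let $N$ be a positive integer and let $X$ be a $\{0,1,\dots,N\}$-valued random variable. Let $C$ be a finite set and let $\rho$ be a probability measure on $\{0,1,\dots,N\}^C$. Assume that for every $c\in C$, the distribution of $X$ is stochastically dominated by the $c$-marginal of $\rho$. Let $H$ be a $C$-valued random variable (defined on the same probability space as $X$, with arbitrary joint law). Let $Y$ be the random element of $\{0,1,\dots,N\}^C$ defined by $Y(c)=X\,\mathbf{1}_{H=c}$. Then the distribution of $Y$ is stochastically dominated by $\rho$.
   Context: $\{0,1,\dots,N\}^C$ carries the product order. Stochastic domination of $\mu$ by $\nu$ means there exist $X\sim\mu$, $Y\sim\nu$ on a common probability space with $X\le Y$ almost surely. *)

(* Defs.v *)
From mathcomp Require Import all_boot all_order all_algebra.
Set Implicit Arguments. Unset Strict Implicit. Unset Printing Implicit Defensive.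
Import Order.TTheory GRing.Theory Num.Theory.
Local Open Scope ring_scope.

Section Defs.
Variable R : realFieldType.

Definition is_pmf (T : finType) (p : T -> R) : Prop :=
  (forall t, 0 <= p t) /\ \sum_(t : T) p t = 1.

Definition pushforward (T U : finType) (p : T -> R) (f : T -> U) : U -> R :=
  fun u => \sum_(t : T | f t == u) p t.

(* Stochastic domination of mu by nu w.r.t. the order le on a finite space:
   there is a coupling (joint law of (X,Y)) with marginals mu, nu
   supported on {(x,y) | le x y}, i.e. X <= Y almost surely. *)
Definition stoch_dom (T : finType) (le : rel T) (mu nu : T -> R) : Prop :=
  exists pi : T * T -> R,
    [/\ is_pmf pi,
        (forall x y, pi (x, y) != 0 -> le x y),
        pushforward pi fst = mu &
        pushforward pi snd = nu].
End Defs.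

Definition ord_le (N : nat) : rel 'I_N.+1 := fun a b => (a <= b)%N.

Definition prod_le (N : nat) (C : finType) : rel {ffun C -> 'I_N.+1} :=
  fun f g => [forall c, (f c <= g c)%N].

Definition Ymap (N : nat) (C : finType) (xh : 'I_N.+1 * C) : {ffun C -> 'I_N.+1} :=
  [ffun c => if c == xh.2 then xh.1 else ord0].

(* Main.v *)
Require Import Defs.
From mathcomp Require Import all_boot all_order all_algebra.
From mathcomp Require Import zify ring lra.
From Stdlib Require Import FunctionalExtensionality.
Import Order.TTheory GRing.Theory Num.Theory.
Local Open Scope ring_scope.

Section Proof.
Variable R : realFieldType.

Lemma push_sum (T U : finType) (p : T -> R) (f : T -> U) (P : pred U) :
  \sum_(u | P u) pushforward p f u = \sum_(t | P (f t)) p t.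
Proof.
rewrite (partition_big f P) //=; apply: eq_bigr => u Pu.
rewrite /pushforward; apply: eq_bigl => t.
by case: eqP => [->|]; rewrite ?andbT ?andbF.
Qed.

Lemma part_sum (T U : finType) (g : T -> R) (f : T -> U) (P : pred T) :
  \sum_u \sum_(t | P t && (f t == u)) g t = \sum_(t | P t) g t.
Proof. by rewrite (partition_big f xpredT). Qed.

Variables (N : nat) (C : finType).
Variable joint : 'I_N.+1 * C -> R.
Variable rho : {ffun C -> 'I_N.+1} -> R.
Local Notation T := {ffun C -> 'I_N.+1}.
Hypothesis j0 : forall p, 0 <= joint p.

Definition dl (L : nat) (h : C) : R :=
  \sum_(p : 'I_N.+1 * C | (p.1 == L :> nat) && (p.2 == h)) joint p.
Definition ind (b : bool) : R := if b then 1 else 0.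
Definition Ssum (L : nat) (r : T -> R) (h : C) := \sum_(G : T | (L <= G h)%N) r G.
Definition allocr (L : nat) (r : T -> R) (h : C) (F : T) : R :=
  dl L h * r F * ind (L <= F h)%N / Ssum L r h.
Fixpoint res (k : nat) : T -> R :=
  match k with
  | 0 => rho
  | k'.+1 => fun F => res k' F - \sum_h allocr (N - k') (res k') h F
  end.

Definition Inv k (r : T -> R) :=
  [/\ forall F, 0 <= r F,
      \sum_F r F = \sum_(p : 'I_N.+1 * C | (p.1 + k <= N)%N) joint p &
      forall (t : nat) c, \sum_(p : 'I_N.+1 * C | (t <= p.1)%N && (p.1 + k <= N)%N) joint p
                   <= \sum_(G : T | (t <= G c)%N) r G].

Lemma ind_ge0 b : 0 <= ind b. Proof. by case: b; rewrite /ind. Qed.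
Lemma ind_le1 b : ind b <= 1. Proof. by case: b; rewrite /ind. Qed.

Lemma step k r : (k <= N)%N -> Inv k r ->
  [/\ (forall h, \sum_F allocr (N-k) r h F = dl (N - k)%N h),
      (forall h F, 0 <= allocr (N-k) r h F) &
      Inv k.+1 (fun F => r F - \sum_h allocr (N-k) r h F)].
Proof.
move=> kN [r0 rsum rtail].
set L := (N - k)%N.
have dl0 : forall h, 0 <= dl L h by move=> h; apply: sumr_ge0.
have Jeq : \sum_h dl L h = \sum_(p : 'I_N.+1 * C | p.1 == L :> nat) joint p.
  by rewrite /dl (@part_sum _ _ joint snd (fun p => p.1 == L :> nat)).
have JS : forall h, \sum_h' dl L h' <= Ssum L r h.
  move=> h; rewrite Jeq /Ssum; apply: le_trans (rtail L h).
  by rewrite le_eqVlt; apply/orP; left; apply/eqP; apply: eq_bigl => p; lia.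
have S0 : forall h, 0 <= Ssum L r h by move=> h; apply: sumr_ge0.
have dlJ : forall h, dl L h <= \sum_h' dl L h'.
  move=> h; rewrite (bigD1 h) //= lerDl; apply: sumr_ge0 => *; exact: dl0.
have asum : forall h, \sum_F allocr L r h F = dl L h.
  move=> h.
  have -> : \sum_F allocr L r h F = dl L h / Ssum L r h * Ssum L r h.
    rewrite /Ssum [X in _ = _ * X]big_mkcond mulr_sumr; apply: eq_bigr => F _.
    rewrite /allocr /ind; case: ifP => _ /=; rewrite /Ssum; ring.
  have [e|nz] := eqVneq (Ssum L r h) 0; last by rewrite divfK.
  rewrite e mulr0; apply/esym/eqP; rewrite eq_le dl0 andbT.
  by rewrite -e; apply: le_trans (dlJ h) (JS h).
have a0 : forall h F, 0 <= allocr L r h F.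
  move=> h F; rewrite /allocr; apply: divr_ge0 => //.
  by rewrite mulr_ge0 ?ind_ge0 // mulr_ge0.
have ale : forall F, \sum_h allocr L r h F <= r F.
  move=> F; have [J0|Jn] := eqVneq (\sum_h dl L h) 0.
    have dz := psumr_eq0P (fun h _ => dl0 h) J0.
    rewrite big1 // => h _; by rewrite /allocr dz ?mul0r.
  have Jp : 0 < \sum_h dl L h by rewrite lt_def Jn sumr_ge0.
  apply: (@le_trans _ _ (\sum_h r F * (dl L h / \sum_h' dl L h'))).
    apply: ler_sum => h _; rewrite /allocr.
    have -> : dl L h * r F * ind (L <= F h)%N / Ssum L r h =
              (dl L h * r F) * (ind (L <= F h)%N / Ssum L r h) by ring.
    have -> : r F * (dl L h / \sum_h' dl L h') =
              (dl L h * r F) * (\sum_h' dl L h')^-1 by ring.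
    apply: ler_wpM2l; first by rewrite mulr_ge0.
    apply: (@le_trans _ _ (Ssum L r h)^-1).
      by rewrite ler_piMl ?invr_ge0 ?ind_le1 ?ind_ge0.
    by rewrite lef_pV2 ?JS // posrE (lt_le_trans Jp (JS h)).
  by rewrite -mulr_sumr -mulr_suml divff ?mulr1.
split => //; split.
- by move=> F; rewrite subr_ge0.
- rewrite sumrB exchange_big /=.
  under [X in _ - X = _]eq_bigr do rewrite asum.
  rewrite rsum Jeq (bigID (fun p : 'I_N.+1 * C => (p.1 + k.+1 <= N)%N)) /=.
  have -> : \sum_(i : 'I_N.+1 * C | (i.1 + k <= N)%N && ~~ (i.1 + k.+1 <= N)%N) joint i =
            \sum_(p : 'I_N.+1 * C | p.1 == L :> nat) joint p.
    by apply: eq_bigl => p; rewrite /L; lia.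
  rewrite addrK; apply: eq_bigl => p; lia.
- move=> t c; have [tL|Lt] := leqP t L; last first.
    rewrite big_pred0; last by move=> p; rewrite /L in Lt; lia.
    by apply: sumr_ge0 => G _; rewrite subr_ge0.
  rewrite sumrB; apply: (@le_trans _ _
     (\sum_(G : T | (t <= G c)%N) r G - \sum_h dl L h)); last first.
    apply: lerB => //.
    have -> : \sum_h dl L h = \sum_F \sum_h allocr L r h F.
      by rewrite exchange_big; apply: eq_bigr => h _; rewrite asum.
    rewrite [X in _ <= X](bigID (fun G : T => (t <= G c)%N)) /= lerDl.
    by apply: sumr_ge0 => G _; apply: sumr_ge0.
  rewrite lerBrDr; apply: le_trans (rtail t c).
  rewrite Jeq (bigID (fun p : 'I_N.+1 * C => (p.1 + k.+1 <= N)%N) (fun p => (t <= p.1)%N && (p.1 + k <= N)%N)) /=.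
  apply: lerD; rewrite le_eqVlt; apply/orP; left; apply/eqP; apply: eq_bigl => p; rewrite /L in tL *; lia.
Qed.

Hypothesis rho0 : forall F, 0 <= rho F.
Hypothesis rho1 : \sum_F rho F = 1.
Hypothesis init : Inv 0 rho.

Lemma inv_all k : (k <= N.+1)%N -> Inv k (res k).
Proof.
elim: k => [|k IH] kN; first exact: init.
have [_ _ H] := @step k (res k) ltac:(lia) (IH ltac:(lia)).
exact: H.
Qed.

Lemma alloc_props k : (k <= N)%N ->
  [/\ (forall h, \sum_F allocr (N - k)%N (res k) h F = dl (N - k)%N h) &
  (forall h F, 0 <= allocr (N - k)%N (res k) h F)].
Proof.
move=> kN; have [A B _] := @step k (res k) kN (@inv_all k ltac:(lia)); by split.
Qed.

Lemma tele n F : \sum_(k < n) \sum_h allocr (N - k) (res k) h F = rho F - res n F.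
Proof.
elim: n => [|n IH]; first by rewrite big_ord0 subrr.
by rewrite big_ord_recr /= IH; ring.
Qed.

Lemma res_end F : res N.+1 F = 0.
Proof.
have [r0 rs _] := @inv_all N.+1 (leqnn N.+1).
rewrite [X in _ = X]big_pred0 in rs; last by move=> p; lia.
by apply: (psumr_eq0P (fun G _ => r0 G) rs).
Qed.

Definition kap (p : 'I_N.+1 * C) (F : T) := allocr p.1 (res (N - p.1)) p.2 F.

Lemma pN (p : 'I_N.+1 * C) : (p.1 <= N)%N.
Proof. by rewrite -ltnS ltn_ord. Qed.

Lemma kap_ge0 p F : 0 <= kap p F.
Proof.
have [_ B] := @alloc_props _ (leq_subr p.1 N).
by have := B p.2 F; rewrite subKn ?pN.
Qed.

Lemma kap_sum p : \sum_F kap p F = joint p.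
Proof.
have [A _] := @alloc_props _ (leq_subr p.1 N).
rewrite /kap; have := A p.2; rewrite subKn ?pN // => ->.
by rewrite /dl (big_pred1 p) // => q.
Qed.

Lemma kap_supp p F : kap p F != 0 -> (p.1 <= F p.2)%N.
Proof.
rewrite /kap /allocr /ind; case: ifP => // _.
by rewrite mulr0 mul0r eqxx.
Qed.

Lemma kap_sumP F : \sum_p kap p F = rho F.
Proof.
transitivity (\sum_x \sum_h kap (x, h) F).
  by rewrite pair_big; apply: eq_bigr => -[x h] _.
rewrite (reindex_inj rev_ord_inj) /=.
transitivity (\sum_(k < N.+1) \sum_h allocr (N - k) (res k) h F).
  apply: eq_bigr => k _; apply: eq_bigr => h _.
  rewrite /kap /= subSS subKn //; by rewrite -ltnS ltn_ord.
by rewrite tele res_end subr0.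
Qed.

Lemma main_coupling : stoch_dom (@prod_le N C) (pushforward joint (@Ymap N C)) rho.
Proof.
exists (fun q : T * T => \sum_(p | Ymap p == q.1) kap p q.2); split.
- split; first by move=> q; apply: sumr_ge0 => p _; exact: kap_ge0.
  rewrite -(pair_big xpredT xpredT (fun y F => \sum_(p | Ymap p == y) kap p F)) /=.
  rewrite exchange_big /= -rho1; apply: eq_bigr => F _.
  rewrite -kap_sumP; exact: (@part_sum _ _ (fun p => kap p F) (@Ymap N C) xpredT).
- move=> y F nz.
  have [p /andP[/eqP <- np]] : exists p, (Ymap p == y) && (kap p F != 0).
    apply/existsP; apply: contraR nz; rewrite negb_exists => /forallP H.
    apply/eqP; apply: big1 => p yp; move: (H p); rewrite yp /=; by move/negbNE/eqP.
  apply/forallP => c; rewrite /Ymap ffunE; case: eqP => [->|_]; first exact: kap_supp.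
  by [].
- apply: functional_extensionality => y; rewrite /pushforward.
  transitivity (\sum_(y' | y' == y) \sum_(F : T | true) \sum_(p | Ymap p == y') kap p F).
    symmetry; rewrite pair_big_dep; apply: eq_big => // t; by rewrite andbT.
  rewrite big_pred1_eq exchange_big; apply: eq_bigr => p _; exact: kap_sum.
- apply: functional_extensionality => F; rewrite /pushforward.
  transitivity (\sum_(y : T | true) \sum_(F' | F' == F) \sum_(p | Ymap p == y) kap p F').
    symmetry; rewrite pair_big_dep; apply: eq_big => // t.
  under eq_bigr do rewrite big_pred1_eq.
  rewrite -kap_sumP; exact: (@part_sum _ _ (fun p => kap p F) (@Ymap N C) xpredT).
Qed.
End Proof.

(* joint : joint law of (X, H); rho : probability on {0..N}^C *)
Theorem lemma2p11 (R : realFieldType) (N : nat) (C : finType)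
  (joint : 'I_N.+1 * C -> R) (rho : {ffun C -> 'I_N.+1} -> R) :
  (0 < N)%N ->
  is_pmf joint ->
  is_pmf rho ->
  (forall c : C, stoch_dom (@ord_le N) (pushforward joint fst)
                   (pushforward rho (fun f => f c))) ->
  stoch_dom (@prod_le N C) (pushforward joint (@Ymap N C)) rho.
Proof.
move=> _ [j0 j1] [r0 r1] hdom.
apply: main_coupling => //.
split => //.
  by rewrite r1 -j1; apply: eq_bigl => p; rewrite addn0 -ltnS ltn_ord.
move=> t c; have [pi [[pi0 pi1] supp m1 m2]] := hdom c.
have -> : \sum_(p : 'I_N.+1 * C | (t <= p.1)%N && (p.1 + 0 <= N)%N) joint p
   = \sum_(x : 'I_N.+1 | (t <= x)%N) pushforward joint fst x.
  rewrite push_sum; apply: eq_bigl => p /=; by rewrite addn0 (leq_trans _ (leq_ord p.1)) ?andbT // ?leqnn.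
apply: le_trans (_ : \sum_(y : 'I_N.+1 | (t <= y)%N) pushforward rho (fun f => f c) y <= _); last first.
  by rewrite push_sum.
rewrite -m1 -m2 !push_sum /= big_mkcond [X in _ <= X]big_mkcond /=.
apply: ler_sum => -[x y] _ /=.
case: ifP => tx; last by case: ifP => // _; exact: pi0.
have [->|nz] := eqVneq (pi (x, y)) 0; first by case: ifP.
by have := supp x y nz; rewrite /ord_le => xy; rewrite (leq_trans tx xy).
Qed.
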